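(* Let $p,q\ge2$, $\mu\in\mathbb{C}\setminus\{0\}$ and $P(u,v;\mu)=\mu(u^p+\bar u)+v^q+\bar v$, regarded as a map $\mathbb{R}^4\to\mathbb{R}^2$. If $z_0=(u_0,v_0)$ is a singular point of $P$ (a point where its real differential has rank $<2$), then $p|u_0|^{p-1}=q|v_0|^{q-1}=1$ (in particular $u_0v_0\neq0$) and, for any choice of real representatives of $\arg u_0,\arg v_0,\arg\mu$, there is an integer $\kappa$ with $\frac{p-1}{2}\arg u_0+\arg\mu=\frac{q-1}{2}\arg v_0+\kappa\pi$. *)

(* Defs.v *)
From Stdlib Require Import Reals ZArith.
Open Scope R_scope.

(* Complex numbers as (real part, imaginary part). *)
Definition Cx : Type := (R * R)%type.
Definition C0 : Cx := (0, 0).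
Definition C1 : Cx := (1, 0).
Definition Cadd (z w : Cx) : Cx := (fst z + fst w, snd z + snd w).
Definition Cmul (z w : Cx) : Cx :=
  (fst z * fst w - snd z * snd w, fst z * snd w + snd z * fst w).
Definition Cconj (z : Cx) : Cx := (fst z, - snd z).
Fixpoint Cpow (z : Cx) (n : nat) : Cx :=
  match n with O => C1 | S m => Cmul z (Cpow z m) end.
Definition Cmod (z : Cx) : R := sqrt (fst z ^ 2 + snd z ^ 2).

Definition Pfun (p q : nat) (mu u v : Cx) : Cx :=
  Cadd (Cadd (Cmul mu (Cadd (Cpow u p) (Cconj u))) (Cpow v q)) (Cconj v).

(* P regarded as a map R^4 -> R^2; coordinates x 0, x 1, x 2, x 3 are
   Re u, Im u, Re v, Im v; output components 0, 1 are Re P, Im P. *)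
Definition Preal (p q : nat) (mu : Cx) (x : nat -> R) : Cx :=
  Pfun p q mu (x 0%nat, x 1%nat) (x 2%nat, x 3%nat).
Definition comp (i : nat) (z : Cx) : R := if Nat.eqb i 0 then fst z else snd z.
Definition coords (u v : Cx) : nat -> R :=
  fun k => match k with 0%nat => fst u | 1%nat => snd u | 2%nat => fst v | _ => snd v end.
Definition upd (x : nat -> R) (j : nat) (t : R) : nat -> R :=
  fun k => if Nat.eqb k j then x k + t else x k.

Definition is_jacobian (p q : nat) (mu : Cx) (x : nat -> R) (J : nat -> nat -> R) : Prop :=
  forall i j, (i < 2)%nat -> (j < 4)%nat ->
    derivable_pt_lim (fun t => comp i (Preal p q mu (upd x j t))) 0 (J i j).

(* A 2x4 matrix has rank < 2 iff its two rows are linearly dependent. *)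
Definition rank_lt_2 (J : nat -> nat -> R) : Prop :=
  exists a b : R, (a <> 0 \/ b <> 0) /\
    forall j, (j < 4)%nat -> a * J 0%nat j + b * J 1%nat j = 0.

Definition singular_point (p q : nat) (mu u v : Cx) : Prop :=
  exists J, is_jacobian p q mu (coords u v) J /\ rank_lt_2 J.

Definition is_arg (z : Cx) (theta : R) : Prop :=
  z <> C0 /\ fst z = Cmod z * cos theta /\ snd z = Cmod z * sin theta.

(* Main.v *)
Require Import Defs.
From Stdlib Require Import Reals ZArith Lra Lia Psatz FunctionalExtensionality.
Open Scope R_scope.

Definition Cder (z : R -> Cx) (t : R) (d : Cx) : Prop :=
  derivable_pt_lim (fun s => fst (z s)) t (fst d) /\
  derivable_pt_lim (fun s => snd (z s)) t (snd d).

Lemma der_eq f x l l' : derivable_pt_lim f x l -> l = l' -> derivable_pt_lim f x l'.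
Proof. intros H ->; exact H. Qed.

Lemma Cder_eq z t d d' : Cder z t d -> d = d' -> Cder z t d'.
Proof. intros H ->; exact H. Qed.

Lemma Cder_const c t : Cder (fun _ => c) t C0.
Proof. split; apply derivable_pt_lim_const. Qed.

Lemma Cder_add z w t dz dw : Cder z t dz -> Cder w t dw ->
  Cder (fun s => Cadd (z s) (w s)) t (Cadd dz dw).
Proof.
  intros [H1 H2] [H3 H4]; split.
  - exact (derivable_pt_lim_plus (fun s => fst (z s)) (fun s => fst (w s)) _ _ _ H1 H3).
  - exact (derivable_pt_lim_plus (fun s => snd (z s)) (fun s => snd (w s)) _ _ _ H2 H4).
Qed.

Lemma Cder_conj z t dz : Cder z t dz -> Cder (fun s => Cconj (z s)) t (Cconj dz).
Proof.
  intros [H1 H2]; split.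
  - exact H1.
  - exact (derivable_pt_lim_opp (fun s => snd (z s)) _ _ H2).
Qed.

Lemma Cder_mul z w t dz dw : Cder z t dz -> Cder w t dw ->
  Cder (fun s => Cmul (z s) (w s)) t (Cadd (Cmul dz (w t)) (Cmul (z t) dw)).
Proof.
  intros [H1 H2] [H3 H4]; split.
  - eapply der_eq.
    + exact (derivable_pt_lim_minus
        (mult_fct (fun s => fst (z s)) (fun s => fst (w s)))
        (mult_fct (fun s => snd (z s)) (fun s => snd (w s))) _ _ _
        (derivable_pt_lim_mult _ _ _ _ _ H1 H3)
        (derivable_pt_lim_mult _ _ _ _ _ H2 H4)).
    + simpl; ring.
  - eapply der_eq.
    + exact (derivable_pt_lim_plus
        (mult_fct (fun s => fst (z s)) (fun s => snd (w s)))
        (mult_fct (fun s => snd (z s)) (fun s => fst (w s))) _ _ _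
        (derivable_pt_lim_mult _ _ _ _ _ H1 H4)
        (derivable_pt_lim_mult _ _ _ _ _ H2 H3)).
    + simpl; ring.
Qed.

Lemma Cder_pow z t dz n : Cder z t dz ->
  Cder (fun s => Cpow (z s) (S n)) t (Cmul (INR (S n), 0) (Cmul (Cpow (z t) n) dz)).
Proof.
  intros H. induction n as [|n IH].
  - eapply Cder_eq.
    + exact (Cder_mul z (fun _ => Defs.C1) t dz C0 H (Cder_const Defs.C1 t)).
    + destruct (z t), dz; unfold Cmul, Cadd, Defs.C1, C0; simpl; f_equal; ring.
  - eapply Cder_eq.
    + exact (Cder_mul z (fun s => Cpow (z s) (S n)) t dz _ H IH).
    + rewrite (S_INR (S n)). cbn [Cpow]. generalize (INR (S n)); intro N.
      generalize (Cpow (z t) n); intros [c d].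
      destruct (z t) as [a b], dz as [e f].
      unfold Cmul, Cadd; simpl fst; simpl snd.
      f_equal; ring.
Qed.

Lemma Cder_P_u p q mu v z u t h : (1 <= p)%nat -> Cder z t h -> z t = u ->
  Cder (fun s => Pfun p q mu (z s) v) t
    (Cmul mu (Cadd (Cmul (INR p, 0) (Cmul (Cpow u (p-1)) h)) (Cconj h))).
Proof.
  intros Hp H Hz. destruct p as [|p']; [lia|].
  eapply Cder_eq.
  - unfold Pfun.
    apply (Cder_add _ (fun _ => Cconj v)); [|apply Cder_const].
    apply (Cder_add _ (fun _ => Cpow v q)); [|apply Cder_const].
    apply (Cder_mul (fun _ => mu)); [apply Cder_const|].
    apply Cder_add; [apply Cder_pow; exact H| apply Cder_conj; exact H].
  - rewrite Hz. replace (S p' - 1)%nat with p' by lia.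
    generalize (Cpow u p'); intros [c d]. destruct mu, h, (Cpow v q), (Cconj v).
    unfold Cmul, Cadd, Cconj, C0; simpl. f_equal; ring.
Qed.

Lemma Cder_P_v p q mu u z v t h : (1 <= q)%nat -> Cder z t h -> z t = v ->
  Cder (fun s => Pfun p q mu u (z s)) t
    (Cadd (Cmul (INR q, 0) (Cmul (Cpow v (q-1)) h)) (Cconj h)).
Proof.
  intros Hq H Hz. destruct q as [|q']; [lia|].
  eapply Cder_eq.
  - unfold Pfun.
    apply Cder_add; [|apply Cder_conj; exact H].
    apply (Cder_add (fun _ => Cmul mu (Cadd (Cpow u p) (Cconj u)))); [apply Cder_const|].
    apply Cder_pow; exact H.
  - rewrite Hz. replace (S q' - 1)%nat with q' by lia.
    generalize (Cpow v q'); intros [c d]. destruct h.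
    unfold Cmul, Cadd, Cconj, C0; simpl. f_equal; ring.
Qed.

Lemma Cder_id1 a b : Cder (fun s => (a + s, b)) 0 (1, 0).
Proof.
  split; simpl.
  - eapply der_eq. exact (derivable_pt_lim_plus (fun _ => a) id _ _ _
      (derivable_pt_lim_const a 0) (derivable_pt_lim_id 0)). ring.
  - apply derivable_pt_lim_const.
Qed.

Lemma Cder_id2 a b : Cder (fun s => (a, b + s)) 0 (0, 1).
Proof.
  split; simpl.
  - apply derivable_pt_lim_const.
  - eapply der_eq. exact (derivable_pt_lim_plus (fun _ => b) id _ _ _
      (derivable_pt_lim_const b 0) (derivable_pt_lim_id 0)). ring.
Qed.

Definition Nsq (z : Cx) : R := fst z ^ 2 + snd z ^ 2.
Definition ex (t : R) : Cx := (cos t, sin t).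

Lemma Nsq_mul z w : Nsq (Cmul z w) = Nsq z * Nsq w.
Proof. destruct z, w; unfold Nsq, Cmul; simpl; ring. Qed.

Lemma Nsq_pow z n : Nsq (Cpow z n) = Nsq z ^ n.
Proof.
  induction n as [|n IH]; simpl Cpow.
  - unfold Nsq, Defs.C1; simpl; ring.
  - rewrite Nsq_mul, IH; simpl; ring.
Qed.

Lemma Nsq_ge0 z : 0 <= Nsq z.
Proof. unfold Nsq; destruct z; simpl; nra. Qed.

Lemma Nsq_pos z : z <> C0 -> 0 < Nsq z.
Proof.
  intros H; destruct z as [x y]; unfold Nsq; simpl.
  destruct (Req_dec x 0); destruct (Req_dec y 0); subst; try nra.
  exfalso; apply H; reflexivity.
Qed.

Lemma ex_add s t : ex (s + t) = Cmul (ex s) (ex t).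
Proof. unfold ex, Cmul; simpl; rewrite cos_plus, sin_plus; f_equal; ring. Qed.

Lemma polar z th : is_arg z th -> z = Cmul (Cmod z, 0) (ex th).
Proof.
  intros [_ [H1 H2]]. destruct z as [x y]; unfold Cmul, ex; simpl in *.
  set (r := Cmod (x, y)) in *. f_equal; [rewrite H1 at 1 | rewrite H2 at 1]; ring.
Qed.

Lemma demoivre r th n :
  Cpow (Cmul (r, 0) (ex th)) n = Cmul (r ^ n, 0) (ex (INR n * th)).
Proof.
  induction n as [|n IH].
  - unfold Cmul, ex, Defs.C1; simpl; rewrite Rmult_0_l, cos_0, sin_0; unfold Defs.C1; f_equal; ring.
  - cbn [Cpow]. rewrite IH, S_INR.
    replace ((INR n + 1) * th) with (th + INR n * th) by ring.
    rewrite ex_add. unfold ex, Cmul; simpl; f_equal; ring.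
Qed.

Lemma key g E : fst (Cmul g E) = - fst g -> snd (Cmul g E) = snd g ->
  Cmul (Cmul g g) E = (- Nsq g, 0).
Proof.
  destruct g as [g1 g2], E as [e1 e2]; unfold Cmul, Nsq; simpl; intros H1 H2.
  f_equal.
  - replace ((g1 * g1 - g2 * g2) * e1 - (g1 * g2 + g2 * g1) * e2)
      with (g1 * (g1 * e1 - g2 * e2) - g2 * (g1 * e2 + g2 * e1)) by ring.
    rewrite H1, H2; ring.
  - replace ((g1 * g1 - g2 * g2) * e2 + (g1 * g2 + g2 * g1) * e1)
      with (g1 * (g1 * e2 + g2 * e1) + g2 * (g1 * e1 - g2 * e2)) by ring.
    rewrite H1, H2; ring.
Qed.

Lemma cancel G E F : G <> C0 -> Cmul G E = Cmul G F -> E = F.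
Proof.
  intros HG H. pose proof (Nsq_pos G HG) as HN.
  destruct G as [g1 g2], E as [e1 e2], F as [f1 f2]; unfold Cmul, Nsq in *; simpl in *.
  injection H; intros H2 H1.
  assert (A1 : (g1 ^ 2 + g2 ^ 2) * (e1 - f1) = 0).
  { replace ((g1 ^ 2 + g2 ^ 2) * (e1 - f1)) with
      (g1 * (g1 * e1 - g2 * e2) + g2 * (g1 * e2 + g2 * e1)
       - (g1 * (g1 * f1 - g2 * f2) + g2 * (g1 * f2 + g2 * f1))) by ring.
    rewrite H1, H2; ring. }
  assert (A2 : (g1 ^ 2 + g2 ^ 2) * (e2 - f2) = 0).
  { replace ((g1 ^ 2 + g2 ^ 2) * (e2 - f2)) with
      (g1 * (g1 * e2 + g2 * e1) - g2 * (g1 * e1 - g2 * e2)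
       - (g1 * (g1 * f2 + g2 * f1) - g2 * (g1 * f1 - g2 * f2))) by ring.
    rewrite H1, H2; ring. }
  apply Rmult_integral in A1; apply Rmult_integral in A2.
  f_equal; lra.
Qed.

Lemma rows_u a b M K W :
  a * fst (Cmul M (Cadd (Cmul K (Cmul W (1, 0))) (Cconj (1, 0)))) +
  b * snd (Cmul M (Cadd (Cmul K (Cmul W (1, 0))) (Cconj (1, 0)))) = 0 ->
  a * fst (Cmul M (Cadd (Cmul K (Cmul W (0, 1))) (Cconj (0, 1)))) +
  b * snd (Cmul M (Cadd (Cmul K (Cmul W (0, 1))) (Cconj (0, 1)))) = 0 ->
  fst (Cmul (Cmul (a, - b) M) (Cmul K W)) = - fst (Cmul (a, - b) M) /\
  snd (Cmul (Cmul (a, - b) M) (Cmul K W)) = snd (Cmul (a, - b) M).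
Proof.
  destruct M as [m1 m2], K as [k1 k2], W as [w1 w2];
  unfold Cmul, Cadd, Cconj; simpl; intros H0 H1; split; nra.
Qed.

Lemma rows_v a b K W :
  a * fst (Cadd (Cmul K (Cmul W (1, 0))) (Cconj (1, 0))) +
  b * snd (Cadd (Cmul K (Cmul W (1, 0))) (Cconj (1, 0))) = 0 ->
  a * fst (Cadd (Cmul K (Cmul W (0, 1))) (Cconj (0, 1))) +
  b * snd (Cadd (Cmul K (Cmul W (0, 1))) (Cconj (0, 1))) = 0 ->
  fst (Cmul (a, - b) (Cmul K W)) = - fst (a, - b) /\
  snd (Cmul (a, - b) (Cmul K W)) = snd (a, - b).
Proof.
  destruct K as [k1 k2], W as [w1 w2];
  unfold Cmul, Cadd, Cconj; simpl; intros H0 H1; split; nra.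
Qed.

Lemma modfact (n : nat) z : INR n ^ 2 * Nsq z ^ (n - 1) = 1 -> INR n * Cmod z ^ (n - 1) = 1.
Proof.
  intros H.
  assert (Hc : Cmod z ^ 2 = Nsq z) by (unfold Cmod; apply pow2_sqrt; apply Nsq_ge0).
  assert (Hsq : (INR n * Cmod z ^ (n - 1)) ^ 2 = 1).
  { rewrite Rpow_mult_distr, <- pow_mult, Nat.mul_comm, pow_mult, Hc. exact H. }
  assert (H0 : 0 <= INR n * Cmod z ^ (n - 1)).
  { apply Rmult_le_pos; [apply pos_INR | apply pow_le; unfold Cmod; apply sqrt_pos]. }
  nra.
Qed.

Lemma nzfact (n : nat) z : (2 <= n)%nat -> INR n * Cmod z ^ (n - 1) = 1 -> z <> C0.
Proof.
  intros Hn H E; subst z.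
  replace (Cmod C0) with 0 in H by (unfold Cmod, C0; cbn [fst snd]; replace (0 ^ 2 + 0 ^ 2) with 0 by ring; rewrite sqrt_0; reflexivity).
  rewrite pow_i in H by lia. lra.
Qed.

Lemma unitE g E : g <> C0 -> fst (Cmul g E) = - fst g -> snd (Cmul g E) = snd g -> Nsq E = 1.
Proof.
  intros Hg H1 H2.
  assert (H : Nsq (Cmul g E) = Nsq g) by (unfold Nsq; rewrite H1, H2; ring).
  rewrite Nsq_mul in H. pose proof (Nsq_pos g Hg).
  apply (Rmult_eq_reg_l (Nsq g)); lra.
Qed.

Lemma nz_Nsq z : 0 < Nsq z -> z <> C0.
Proof. intros H E; subst; unfold Nsq, C0 in H; simpl in H; lra. Qed.

Theorem lemma3p2 (p q : nat) (mu u0 v0 : Cx) :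
  (2 <= p)%nat -> (2 <= q)%nat -> mu <> C0 ->
  singular_point p q mu u0 v0 ->
  INR p * Cmod u0 ^ (p - 1) = 1 /\ INR q * Cmod v0 ^ (q - 1) = 1 /\
  u0 <> C0 /\ v0 <> C0 /\
  (forall au av am : R, is_arg u0 au -> is_arg v0 av -> is_arg mu am ->
     exists kappa : Z,
       (INR p - 1) / 2 * au + am = (INR q - 1) / 2 * av + IZR kappa * PI).
Proof.
  intros Hp Hq Hmu [J [HJ [a [b [Hab Hr]]]]].
  assert (D0 := Cder_P_u p q mu (fst v0, snd v0) (fun s => (fst u0 + s, snd u0)) u0 0 (1,0)
     ltac:(lia) (Cder_id1 _ _) ltac:(destruct u0; simpl; rewrite Rplus_0_r; reflexivity)).
  assert (D1 := Cder_P_u p q mu (fst v0, snd v0) (fun s => (fst u0, snd u0 + s)) u0 0 (0,1)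
     ltac:(lia) (Cder_id2 _ _) ltac:(destruct u0; simpl; rewrite Rplus_0_r; reflexivity)).
  assert (D2 := Cder_P_v p q mu (fst u0, snd u0) (fun s => (fst v0 + s, snd v0)) v0 0 (1,0)
     ltac:(lia) (Cder_id1 _ _) ltac:(destruct v0; simpl; rewrite Rplus_0_r; reflexivity)).
  assert (D3 := Cder_P_v p q mu (fst u0, snd u0) (fun s => (fst v0, snd v0 + s)) v0 0 (0,1)
     ltac:(lia) (Cder_id2 _ _) ltac:(destruct v0; simpl; rewrite Rplus_0_r; reflexivity)).
  destruct D0 as [D0a D0b], D1 as [D1a D1b], D2 as [D2a D2b], D3 as [D3a D3b].
  pose proof (uniqueness_limite _ _ _ _ (HJ 0%nat 0%nat ltac:(lia) ltac:(lia)) D0a) as J00.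
  pose proof (uniqueness_limite _ _ _ _ (HJ 1%nat 0%nat ltac:(lia) ltac:(lia)) D0b) as J10.
  pose proof (uniqueness_limite _ _ _ _ (HJ 0%nat 1%nat ltac:(lia) ltac:(lia)) D1a) as J01.
  pose proof (uniqueness_limite _ _ _ _ (HJ 1%nat 1%nat ltac:(lia) ltac:(lia)) D1b) as J11.
  pose proof (uniqueness_limite _ _ _ _ (HJ 0%nat 2%nat ltac:(lia) ltac:(lia)) D2a) as J02.
  pose proof (uniqueness_limite _ _ _ _ (HJ 1%nat 2%nat ltac:(lia) ltac:(lia)) D2b) as J12.
  pose proof (uniqueness_limite _ _ _ _ (HJ 0%nat 3%nat ltac:(lia) ltac:(lia)) D3a) as J03.
  pose proof (uniqueness_limite _ _ _ _ (HJ 1%nat 3%nat ltac:(lia) ltac:(lia)) D3b) as J13.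
  pose proof (Hr 0%nat ltac:(lia)) as R0. rewrite J00, J10 in R0.
  pose proof (Hr 1%nat ltac:(lia)) as R1. rewrite J01, J11 in R1.
  pose proof (Hr 2%nat ltac:(lia)) as R2. rewrite J02, J12 in R2.
  pose proof (Hr 3%nat ltac:(lia)) as R3. rewrite J03, J13 in R3.
  destruct (rows_u a b mu (INR p, 0) (Cpow u0 (p - 1)) R0 R1) as [X1 X2].
  destruct (rows_v a b (INR q, 0) (Cpow v0 (q - 1)) R2 R3) as [Y1 Y2].
  assert (Hc : (a, - b) <> C0).
  { intro E; injection E; intros; destruct Hab; lra. }
  assert (Hg : Cmul (a, - b) mu <> C0).
  { apply nz_Nsq; rewrite Nsq_mul; apply Rmult_lt_0_compat; apply Nsq_pos; auto. }
  pose proof (unitE _ _ Hg X1 X2) as NU.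
  pose proof (unitE _ _ Hc Y1 Y2) as NV.
  rewrite Nsq_mul, Nsq_pow in NU, NV.
  assert (MU : INR p * Cmod u0 ^ (p - 1) = 1).
  { apply modfact. unfold Nsq at 1 in NU; simpl fst in NU; simpl snd in NU. lra. }
  assert (MV : INR q * Cmod v0 ^ (q - 1) = 1).
  { apply modfact. unfold Nsq at 1 in NV; simpl fst in NV; simpl snd in NV. lra. }
  split; [exact MU|]. split; [exact MV|].
  split; [exact (nzfact p u0 Hp MU)|]. split; [exact (nzfact q v0 Hq MV)|].
  intros au av am Au Av Am.
  assert (KU : Cmul (INR p, 0) (Cpow u0 (p - 1)) = ex (INR (p - 1) * au)).
  { rewrite (polar u0 au Au) at 1. rewrite demoivre.
    generalize (ex (INR (p - 1) * au)); intros [e1 e2]. unfold Cmul; cbn [fst snd].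
    f_equal; [transitivity ((INR p * Cmod u0 ^ (p - 1)) * e1)
             | transitivity ((INR p * Cmod u0 ^ (p - 1)) * e2)]; try ring;
    rewrite MU; ring. }
  assert (KV : Cmul (INR q, 0) (Cpow v0 (q - 1)) = ex (INR (q - 1) * av)).
  { rewrite (polar v0 av Av) at 1. rewrite demoivre.
    generalize (ex (INR (q - 1) * av)); intros [e1 e2]. unfold Cmul; cbn [fst snd].
    f_equal; [transitivity ((INR q * Cmod v0 ^ (q - 1)) * e1)
             | transitivity ((INR q * Cmod v0 ^ (q - 1)) * e2)]; try ring;
    rewrite MV; ring. }
  rewrite KU in X1, X2. rewrite KV in Y1, Y2.
  pose proof (key _ _ X1 X2) as KeyU.
  pose proof (key _ _ Y1 Y2) as KeyV.
  pose proof (polar mu am Am) as Hpm.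
  assert (Nmu : Nsq mu = Cmod mu ^ 2)
    by (symmetry; unfold Cmod; apply pow2_sqrt; apply Nsq_ge0).
  assert (mpos : 0 < Cmod mu) by (unfold Cmod; apply sqrt_lt_R0; exact (Nsq_pos mu Hmu)).
  set (m := Cmod mu) in *. clearbody m.
  set (al := INR (p - 1) * au) in *. set (be := INR (q - 1) * av) in *.
  set (G := Cmul (Cmul (a, - b) (a, - b)) (m ^ 2, 0)).
  assert (HG : G <> C0).
  { apply nz_Nsq. unfold G. rewrite !Nsq_mul.
    pose proof (Nsq_pos _ Hc).
    assert (0 < Nsq (m ^ 2, 0)) by (unfold Nsq; cbn [fst snd]; assert (0 < m ^ 2) by (apply pow_lt; lra); nra).
    apply Rmult_lt_0_compat; [apply Rmult_lt_0_compat|]; auto. }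
  assert (Heq : Cmul G (ex (am + am + al)) = Cmul G (ex be)).
  { transitivity ((- (Nsq (a, - b) * m ^ 2), 0)).
    - rewrite !ex_add. transitivity (Cmul (Cmul (Cmul (a, - b) mu) (Cmul (a, - b) mu)) (ex al)).
      + unfold G. rewrite Hpm.
        generalize (ex am), (ex al); intros [k l] [s t]; unfold Cmul; cbn [fst snd];
        f_equal; ring.
      + rewrite KeyU, Nsq_mul, Nmu. reflexivity.
    - symmetry. transitivity (Cmul (m ^ 2, 0) (Cmul (Cmul (a, - b) (a, - b)) (ex be))).
      + unfold G. generalize (ex be); intros [s t]; unfold Cmul; cbn [fst snd];
        f_equal; ring.
      + rewrite KeyV. unfold Cmul; cbn [fst snd]; f_equal; ring. }
  apply cancel in Heq; [|exact HG].
  unfold ex in Heq. injection Heq; intros Hsin Hcos.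
  set (x := am + am + al - be).
  assert (Hx : cos x = 1).
  { unfold x. rewrite cos_minus, Hcos, Hsin. pose proof (sin2_cos2 be).
    unfold Rsqr in *. lra. }
  assert (Hs : sin (x / 2) = 0).
  { replace x with (2 * (x / 2)) in Hx by field. rewrite cos_2a_sin in Hx.
    assert (sin (x / 2) * sin (x / 2) = 0) by lra.
    apply Rmult_integral in H; destruct H; auto. }
  destruct (sin_eq_0_0 _ Hs) as [k Hk]. exists k.
  unfold x, al, be in Hk. rewrite !minus_INR in Hk by lia. simpl INR in Hk.
  lra.
Qed.
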